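(* For any $\lambda_0,\lambda_1>0$ there is a function $f:(0,\infty)\to[0,\infty)$ with $\lim_{\epsilon\downarrow0}f(\epsilon)=0$ such that $$\mathcal{M}_{n+2}^{\epsilon,\lambda_0,\lambda_1}(x)\le f(\epsilon)\,\mathcal{M}_n^{\epsilon,\lambda_0,\lambda_1}(x)\quad\text{for all } n\in\mathbb{N},\ x\in\Gamma^\circ.$$
   Context: Fix $\alpha>\beta>0$. For $i\in\{0,1\}$ let $\Phi_i^t(x)=(i+(x_1-i)e^{-\alpha t},i+(x_2-i)e^{-\beta t})$ and $\Psi_i^t=\Phi_i^{-t}$. Let $\Gamma=\{(x_1,x_2):0\le x_2\le1,\ x_2^{\alpha/\beta}\le x_1\le1-(1-x_2)^{\alpha/\beta}\}$, $\Gamma^\circ$ its interior. For $\mathbf t=(t_1,\dots,t_n)\in(0,\infty)^n$ let $\Psi_0^{\mathbf t}$ be obtained by first applying $\Psi_0^{t_n}$, then $\Psi_1^{t_{n-1}}$, then $\Psi_0^{t_{n-2}}$, and so on alternately; for $0\le j\le n-1$, $\Psi_0^{(t_{n-j},\dots,t_n)}$ is the analogous map built from the last $j+1$ times. Let $T_0^n(x)=\{\mathbf t\in(0,\infty)^n:\Psi_0^{\mathbf t}(x)\in\Gamma^\circ\}$, $D(x)=\alpha\beta(x_1-x_2)$, and $M_n^\epsilon(x)=\{\mathbf t\in T_0^n(x):|D(\Psi_0^{(t_{n-j},\dots,t_n)}x)|<\epsilon,\ 0\le j\le n-1\}$. For real $\lambda_0,\lambda_1$, let $\lambda_0^{(n)}\in\mathbb{R}^n$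 be the vector with alternating entries $\lambda_0,\lambda_1$ whose last entry is $\lambda_0$, and $\mathcal{M}_n^{\epsilon,\lambda_0,\lambda_1}(x)=\int_{M_n^\epsilon(x)}e^{-\langle\lambda_0^{(n)},\mathbf t\rangle}\,d\mathbf t$. *)

(* Defs.v *)
From HB Require Import structures.
From mathcomp Require Import all_boot all_order all_algebra.
From mathcomp Require Import all_classical all_reals all_analysis.
Set Implicit Arguments. Unset Strict Implicit. Unset Printing Implicit Defensive.
Import Order.TTheory GRing.Theory Num.Theory.
Import numFieldNormedType.Exports.
Local Open Scope classical_set_scope.
Local Open Scope ring_scope.

Section Defs.
Variable R : realType.
Variables alpha beta : R.

Definition Phi (i : bool) (t : R) (x : R * R) : R * R :=
  (i%:R + (x.1 - i%:R) * expR (- (alpha * t)),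
   i%:R + (x.2 - i%:R) * expR (- (beta * t))).

Definition Psi (i : bool) (t : R) (x : R * R) : R * R := Phi i (- t) x.

Definition Gamma : set (R * R) :=
  [set x | 0 <= x.2 <= 1 /\
           x.2 `^ (alpha / beta) <= x.1 <= 1 - (1 - x.2) `^ (alpha / beta)].

Definition Gamma_int : set (R * R) := interior Gamma.

Fixpoint psiR (i : bool) (rs : seq R) (x : R * R) : R * R :=
  match rs with
  | [::] => x
  | r :: rs' => psiR (~~ i) rs' (Psi i r x)
  end.

(* For ts = [:: t_1; ...; t_n], Psi0_seq ts = Psi_0^{ts}: first Psi_0^{t_n},
   then Psi_1^{t_{n-1}}, then Psi_0^{t_{n-2}}, ... *)
Definition Psi0_seq (ts : seq R) (x : R * R) : R * R := psiR false (rev ts) x.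

Definition posvec (ts : seq R) : Prop := forall k, (k < size ts)%N -> 0 < ts`_k.

Definition T0 (n : nat) (x : R * R) : set (seq R) :=
  [set ts | size ts = n /\ posvec ts /\ Gamma_int (Psi0_seq ts x)].

Definition D (x : R * R) : R := alpha * beta * (x.1 - x.2).

(* M_n^eps(x); the suffix (t_{n-j},...,t_n) is drop (n-1-j) ts *)
Definition Mset (n : nat) (eps : R) (x : R * R) : set (seq R) :=
  [set ts | T0 n x ts /\
     forall j, (j < n)%N -> `| D (Psi0_seq (drop (n - 1 - j) ts) x) | < eps].

(* lambda_0^{(n)}: alternating entries lam0, lam1, last entry lam0
   (0-indexed entry k is lam0 iff n-1-k is even) *)
Definition lamvec (lam0 lam1 : R) (n k : nat) : R :=
  if odd (n - 1 - k) then lam1 else lam0.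

Definition inner_lam (lam0 lam1 : R) (n : nat) (ts : seq R) : R :=
  \sum_(k < n) lamvec lam0 lam1 n k * ts`_k.

(* Iterated Lebesgue integral over (0,oo)^n (first variable outermost);
   by Tonelli this is the Lebesgue integral over (0,oo)^n for the
   nonnegative measurable integrands used below. *)
Fixpoint iint (n : nat) (F : seq R -> \bar R) : \bar R :=
  match n with
  | 0 => F [::]
  | n'.+1 => (\int[lebesgue_measure]_(s in (`]0%R, +oo[%classic : set R))
                 iint n' (fun ts => F (s :: ts)))%E
  end.

Definition calM (n : nat) (eps lam0 lam1 : R) (x : R * R) : \bar R :=
  iint n (fun ts =>
    ((\1_(Mset n eps x) ts : R) * expR (- inner_lam lam0 lam1 n ts))%:E).

End Defs.

(* Main.v *)
Require Import Defs.
From HB Require Import structures.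
From mathcomp Require Import all_boot all_order all_algebra.
From mathcomp Require Import all_classical all_reals all_analysis.
From mathcomp Require Import measurable_realfun.
From mathcomp.algebra_tactics Require Import ring lra.
From mathcomp Require Import zify.
Import Order.TTheory GRing.Theory Num.Theory.
Import numFieldNormedType.Exports.
Local Open Scope classical_set_scope.
Local Open Scope ring_scope.

Section IntLemmas.
Local Open Scope ereal_scope.
Context d (T : measurableType d) (R : realType).
Variable mu : {measure set T -> \bar R}.
Import HBNNSimple.

Lemma int_le_nm (A B : set T) (f g : T -> \bar R) :
  (forall x, A x -> 0 <= f x) -> (forall x, B x -> 0 <= g x) ->
  (forall x, A x -> B x /\ f x <= g x) ->
  \int[mu]_(x in A) f x <= \int[mu]_(x in B) g x.
Proof.
move=> f0 g0 fg; rewrite ge0_integralE // ge0_integralE //.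
apply: ge_ereal_sup => _ [h hle <-]; apply: ereal_sup_ubound.
exists h => // x; apply: le_trans (hle x) _.
rewrite /patch; case: ifPn => [/set_mem Ax|_].
  by have [Bx fgx] := fg x Ax; rewrite mem_set.
by case: ifPn => // /set_mem Bx; exact: g0.
Qed.

Lemma int_scale_le (A : set T) (f : T -> \bar R) (c : R) : (0 <= c)%R ->
  (forall x, A x -> 0 <= f x) ->
  \int[mu]_(x in A) (c%:E * f x) <= c%:E * \int[mu]_(x in A) f x.
Proof.
move=> c0 f0; have [->|cn0] := eqVneq c 0%R.
  rewrite mul0e; under eq_integral do rewrite mul0e.
  by rewrite integral0.
have cp : (0 < c)%R by rewrite lt0r cn0.
rewrite ge0_integralE; last by move=> x Ax; rewrite mule_ge0 // ?lee_fin // f0.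
rewrite ge0_integralE //.
apply: ge_ereal_sup => _ [h hle <-].
have ci0 : (0 <= c^-1)%R by rewrite invr_ge0.
pose h' := scale_nnsfun h ci0.
have -> : sintegral mu h = c%:E * sintegral mu h'.
  rewrite /h' sintegralrM muleA -EFinM mulfV // mul1e.
  by [].
rewrite lee_pmul2l ?lte_fin //; apply: ereal_sup_ubound; exists h' => // x.
have := hle x; rewrite /h' /= /patch; case: ifPn => _.
  move=> hx; rewrite -(@lee_pmul2l _ c%:E) ?lte_fin // EFinM muleA -EFinM mulfV // mul1r; exact: hx.
move=> hx; rewrite EFinM; apply: mule_ge0_le0 => //; rewrite lee_fin invr_ge0.
Qed.
End IntLemmas.

Section T.
Variable R : realType.
Local Open Scope ereal_scope.
Notation I := (`]0%R, +oo[%classic : set R).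
Notation mu := (@lebesgue_measure R).

Lemma int_exp_le (c : R) : (0 < c)%R ->
  \int[mu]_(s in I) (expR (- (c * s)))%:E <= (c^-1)%:E.
Proof.
move=> c0.
have -> : \int[mu]_(s in I) (expR (- (c * s)))%:E =
   \int[mu]_(s in I) ((c^-1)%:E * (exponential_pdf c s)%:E).
  apply: eq_integral => s; rewrite inE /= in_itv /= andbT => s0.
  by rewrite exponential_pdfE ?ltW // -EFinM mulrA mulVf ?gt_eqF // mul1r mulNr.
rewrite ge0_integralZl_EFin //; last 3 first.
- by move=> s _; rewrite lee_fin exponential_pdf_ge0 // ltW.
- apply/measurable_EFinP; apply: measurable_funTS; exact: measurable_exponential_pdf.
- by rewrite invr_ge0 ltW.
rewrite -[X in _ <= X]mule1 lee_pmul2l ?lte_fin ?invr_gt0 //.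
rewrite -(integral_exponential_pdf c0); apply: int_le_nm => //.
- by move=> s _; rewrite lee_fin exponential_pdf_ge0 // ltW.
- by move=> s _; rewrite lee_fin exponential_pdf_ge0 // ltW.
Qed.

Lemma int_ind_le (rho : R) : (0 < rho)%R ->
  \int[mu]_(s in I) (\1_(`]0%R, rho[%classic : set R) s)%:E <= rho%:E.
Proof.
move=> r0; rewrite integral_indic //.
apply: le_trans (measureIl _ _ _) _ => //.
have := lebesgue_measure_itv `]0%R, rho[; rewrite /= lte_fin r0 sube0 => <-; exact: lexx.
Qed.

Lemma iint_ge0 n (F : seq R -> \bar R) : (forall ts, 0 <= F ts) -> 0 <= iint n F.
Proof.
elim: n F => [|n IH] F F0 //=.
by apply: integral_ge0 => s _; apply: IH.
Qed.

Lemma iint_le n (F G : seq R -> \bar R) : (forall ts, 0 <= F ts) ->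
  (forall ts, F ts <= G ts) -> iint n F <= iint n G.
Proof.
elim: n F G => [|n IH] F G F0 FG //=.
apply: int_le_nm.
- by move=> s _; apply: iint_ge0.
- by move=> s _; apply: iint_ge0 => ts; apply: le_trans (FG _).
- by move=> s Is; split => //; apply: IH.
Qed.

Lemma iint_scale n (c : R) (F : seq R -> \bar R) : (0 <= c)%R ->
  (forall ts, 0 <= F ts) -> iint n (fun ts => c%:E * F ts) <= c%:E * iint n F.
Proof.
elim: n F => [|n IH] F c0 F0 //=.
apply: (@le_trans _ _ (\int[mu]_(s in I) (c%:E * iint n (fun ts => F (s :: ts))))).
  2: by apply: int_scale_le => // s _; apply: iint_ge0.
apply: int_le_nm.
- by move=> s _; apply: iint_ge0 => ts; rewrite mule_ge0 // lee_fin.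
- by move=> s _; rewrite mule_ge0 ?lee_fin //; apply: iint_ge0.
- by move=> s Is; split => //; apply: IH.
Qed.

Lemma meas_expc (X h : R) : measurable_fun I (fun s : R => (X * expR (- (h * s)))%:E).
Proof.
apply/measurable_EFinP; apply: measurable_funM; first exact: measurable_cst.
apply: measurable_funTS; apply: measurableT_comp; first exact: measurable_expR.
rewrite (_ : (fun s : R => (- (h * s))%R) = (fun s : R => ((- h) * s)%R)); last first.
  by apply/funext => s; rewrite mulNr.
by apply: measurable_funM => //; exact: measurable_id.
Qed.

Lemma meas_indc (Z sg : R) : measurable_fun I (fun s : R => (Z * \1_(`]0%R, sg[%classic : set R) s)%:E).
Proof.
apply/measurable_EFinP; apply: measurable_funM; first exact: measurable_cst.
exact: measurable_indic.
Qed.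

Lemma int3 (X Y Z h l sg : R) : (0 <= X)%R -> (0 <= Y)%R -> (0 <= Z)%R ->
  (0 < h)%R -> (0 < l)%R -> (0 < sg)%R ->
  \int[mu]_(s in I) (X * expR (- (h * s)) + Y * expR (- (l * s)) +
     Z * \1_(`]0%R, sg[%classic : set R) s)%:E <= (X / h + Y / l + Z * sg)%:E.
Proof.
move=> X0 Y0 Z0 h0 l0 s0.
have i0 : forall s, (0 <= \1_(`]0%R, sg[%classic : set R) s :> R)%R.
  by move=> s; rewrite indicE.
under eq_integral do rewrite !EFinD.
rewrite ge0_integralD //; last 4 first.
- by move=> s _; rewrite adde_ge0 // lee_fin mulr_ge0 // ltW // expR_gt0.
- by apply: emeasurable_funD; [exact: meas_expc | exact: meas_expc].
- by move=> s _; rewrite lee_fin mulr_ge0.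
- exact: meas_indc.
rewrite ge0_integralD //; last 4 first.
- by move=> s _; rewrite lee_fin mulr_ge0 // ltW // expR_gt0.
- exact: meas_expc.
- by move=> s _; rewrite lee_fin mulr_ge0 // ltW // expR_gt0.
- exact: meas_expc.
have me : forall c : R, measurable_fun I (fun s : R => (expR (- (c * s)))%:E).
  move=> c; rewrite (_ : (fun s : R => _) = (fun s : R => (1 * expR (- (c * s)))%:E)).
    exact: meas_expc.
  by apply/funext => s; rewrite mul1r.
rewrite !EFinD; apply: leeD; first apply: leeD.
- under eq_integral do rewrite EFinM.
  rewrite ge0_integralZl_EFin //; last exact: me.
  by rewrite EFinM; apply: lee_wpmul2l; [rewrite lee_fin | exact: int_exp_le].
- under eq_integral do rewrite EFinM.
  rewrite ge0_integralZl_EFin //; last exact: me.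
  by rewrite EFinM; apply: lee_wpmul2l; [rewrite lee_fin | exact: int_exp_le].
- under eq_integral do rewrite EFinM.
  rewrite ge0_integralZl_EFin //; last by apply/measurable_EFinP; exact: measurable_indic.
  by rewrite EFinM; apply: lee_wpmul2l; [rewrite lee_fin | exact: int_ind_le].
Qed.


End T.

Section Geom.
Variable R : realType.
Variables alpha beta : R.
Hypothesis hb : 0 < beta.
Hypothesis hab : beta < alpha.

Lemma PsiE i t y : Psi alpha beta i t y =
  (i%:R + (y.1 - i%:R) * expR (alpha * t), i%:R + (y.2 - i%:R) * expR (beta * t)).
Proof. by rewrite /Psi /Phi !mulrN !opprK. Qed.

Lemma L1 (p q a b d : R) : 1 <= b -> `|p - q| < d -> `|p * a - q * b| < d ->
  `|p| * (a - b) < 2 * d * b.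
Proof.
move=> b1 h1 h2.
have e : p * (a - b) = (p * a - q * b) - (p - q) * b by ring.
have h3 : `|p| * (a - b) <= `|p * (a - b)|.
  rewrite normrM ler_wpM2l //; exact: ler_norm.
have h4 : `|p * (a - b)| <= `|p * a - q * b| + `|p - q| * b.
  rewrite e; apply: le_trans (ler_normB _ _) _.
  by rewrite normrM (ger0_norm (le_trans ler01 b1)).
have h5 : `|p - q| * b <= d * b by rewrite ler_pM2r ?(lt_le_trans ltr01 b1) // ltW.
have d0 : 0 <= d by apply: le_trans (ltW h1).
have h6 : d <= d * b by rewrite ler_peMr.
lra.
Qed.

Lemma expR_diff (t : R) : 0 <= t ->
  expR (beta * t) * ((alpha - beta) * t) <= expR (alpha * t) - expR (beta * t).
Proof.
move=> t0.
have -> : alpha * t = beta * t + (alpha - beta) * t by ring.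
rewrite expRD.
have := expR_ge1Dx ((alpha - beta) * t).
have := expR_gt0 (beta * t).
nra.
Qed.

Lemma Lstep (d : R) (i : bool) (y : R * R) (t : R) : 0 <= t ->
  `|y.1 - y.2| < d ->
  `|(Psi alpha beta i t y).1 - (Psi alpha beta i t y).2| < d ->
  `|y.1 - i%:R| * ((alpha - beta) * t) < 2 * d.
Proof.
move=> t0 hy hz; rewrite PsiE /= in hz.
have e : i%:R + (y.1 - i%:R) * expR (alpha * t) - (i%:R + (y.2 - i%:R) * expR (beta * t))
  = (y.1 - i%:R) * expR (alpha * t) - (y.2 - i%:R) * expR (beta * t) by ring.
rewrite e in hz.
have hpq : `|(y.1 - i%:R) - (y.2 - i%:R)| < d by rewrite (_ : _ - _ = y.1 - y.2) //; ring.
have b1 : 1 <= expR (beta * t).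
  have := expR_ge1Dx (beta * t); have : 0 <= beta * t by rewrite mulr_ge0 // ltW.
  lra.
have := L1 _ _ _ _ _ b1 hpq hz.
have := expR_diff _ t0.
have := expR_gt0 (beta * t).
have := normr_ge0 (y.1 - i%:R).
set P := `|_|; set B := expR (beta * t); set A := expR (alpha * t).
set C := (alpha - beta) * t.
move=> P0 B0 hd h.
have : B * (P * C) < B * (2 * d) by nra.
by rewrite ltr_pM2l.
Qed.

Lemma key (d : R) (i : bool) (y : R * R) (r s : R) : 0 < d -> 0 < r -> 0 < s ->
  `|y.1 - y.2| < d ->
  `|(Psi alpha beta i s y).1 - (Psi alpha beta i s y).2| < d ->
  `|(Psi alpha beta (~~ i) r (Psi alpha beta i s y)).1 -
    (Psi alpha beta (~~ i) r (Psi alpha beta i s y)).2| < d ->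
  ln ((alpha - beta) / (8 * alpha) / d) / alpha <= s \/
  r < 8 * d / (alpha - beta) \/ s < 4 * d / (alpha - beta).
Proof.
move=> d0 r0 s0 hy hz hw.
have h1 := Lstep d i y s (ltW s0) hy hz.
set z := Psi alpha beta i s y in hz hw h1.
have h2 := Lstep d (~~ i) z r (ltW r0) hz hw.
have a0 : 0 < alpha by apply: lt_trans hab.
have c0 : 0 < alpha - beta by rewrite subr_gt0.
set P := `|y.1 - i%:R| in h1.
set U := `|z.1 - (~~ i)%:R| in h2.
set A := expR (alpha * s).
set c := alpha - beta in c0 h1 h2 *.
have P0 : 0 <= P := normr_ge0 _.
have A1 : 1 <= A.
  rewrite /A; have := expR_ge1Dx (alpha * s); have : 0 <= alpha * s by rewrite mulr_ge0 // ltW.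
  lra.
have hU : 1 - P * A <= U.
  rewrite /U /z PsiE /= /P /A.
  have -> : i%:R + (y.1 - i%:R) * expR (alpha * s) - (~~ i)%:R =
    (i%:R - (~~ i)%:R) + (y.1 - i%:R) * expR (alpha * s) by ring.
  apply: le_trans (lerB_normD _ _).
  have -> : `|i%:R - (~~ i)%:R| = 1 :> R by case: (i) => /=; rewrite ?subr0 ?sub0r ?normrN normr1.
  by rewrite normrM (ger0_norm (ltW (expR_gt0 _))).
set K := c / (8 * alpha).
have K0 : 0 < K by rewrite divr_gt0 // mulr_gt0.
have K8 : K * (8 * alpha) = c by rewrite /K mulfVK // gt_eqF // mulr_gt0.
have [Ss|sS] := leP (ln (K / d) / alpha) s; first by left.
right.
have AK : A * d < K.
  have Kd : 0 < K / d by rewrite divr_gt0.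
  rewrite -ltr_pdivlMr // /A -(lnK Kd) ltr_expR.
  by rewrite mulrC -ltr_pdivlMr.
have [Ph|Ph] := leP (1/2) P.
  right; rewrite ltr_pdivlMr //; nra.
left.
have PA : P * A < 3/4.
  have [A32|A32] := leP A (3/2); first nra.
  have as3 : 1 < 3 * (alpha * s).
    rewrite ltNge; apply/negP => hle.
    have := expR_ge1Dx (- (alpha * s)); rewrite expRN => hi.
    have Ap : 0 < A := expR_gt0 _.
    have : A * (1 - alpha * s) <= A * A^-1 by rewrite ler_pM2l //; lra.
    rewrite mulfV ?gt_eqF //.
    nra.
  have Pc : P * c < 6 * alpha * d.
    have : P * c * (3 * (alpha * s)) = 3 * alpha * (P * (c * s)) by ring.
    have : 0 <= P * c by rewrite mulr_ge0 // ltW.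
    nra.
  have A0 : 0 < A := lt_le_trans ltr01 A1.
  have : P * c * A < 6 * alpha * d * A by rewrite ltr_pM2r.
  have : 0 <= P * c * A by rewrite !mulr_ge0 // ltW.
  nra.
rewrite ltr_pdivlMr //; nra.
Qed.
End Geom.

Lemma convpow (R : realType) (g l a b: R) : 1 <= g -> 0 <= l -> l <= 1 -> 0 <= a -> 0 <= b ->
  (l * a + (1 - l) * b) `^ g <= l * a `^ g + (1 - l) * b `^ g.
Proof.
move=> g1 l0 l1 a0 b0.
by apply: (convex_powR g1 (Itv01 l0 l1)) => //=; rewrite ?inE /= ?in_itv /= ?a0 ?b0.
Qed.

Section Gam.
Variable R : realType.
Variables alpha beta : R.
Hypothesis hb : 0 < beta.
Hypothesis hab : beta < alpha.

Lemma Phi_Psi i t y : Phi alpha beta i t (Psi alpha beta i t y) = y.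
Proof.
case: y => y1 y2; rewrite /Psi /Phi /= !mulrN !opprK.
have E : forall a b : R, a + b - a = b by move=> a b; ring.
by rewrite !E -!mulrA !expRxMexpNx_1 !mulr1 !subrKC.
Qed.

Lemma Gamma_flip z : Gamma alpha beta z -> Gamma alpha beta (1 - z.1, 1 - z.2).
Proof.
rewrite /Gamma /= => -[/andP[z0 z1] /andP[l u]]; split.
  by apply/andP; split; lra.
have -> : 1 - (1 - z.2) = z.2 by ring.
apply/andP; split; lra.
Qed.

Lemma Phi0_Gamma t z : 0 <= t -> Gamma alpha beta z -> Gamma alpha beta (Phi alpha beta false t z).
Proof.
move=> t0; rewrite /Gamma /Phi /= !subr0 !add0r => -[/andP[z0 z1] /andP[l u]].
have a0 : 0 < alpha by apply: lt_trans hab.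
set ea := expR (- (alpha * t)); set eb := expR (- (beta * t)).
have ea0 : 0 < ea := expR_gt0 _.
have eb0 : 0 < eb := expR_gt0 _.
have eb1 : eb <= 1.
  rewrite /eb -expR0 ler_expR; have : 0 <= beta * t by rewrite mulr_ge0 // ltW.
  lra.
have eab : ea <= eb.
  rewrite /ea /eb ler_expR; have : beta * t <= alpha * t by rewrite ler_wpM2r // ltW.
  lra.
have g1 : 1 <= alpha / beta by rewrite ler_pdivlMr // mul1r ltW.
have pe : eb `^ (alpha / beta) = ea.
  rewrite /eb -expRM /ea; congr expR; field; exact: lt0r_neq0.
have z10 : 0 <= z.1 by apply: le_trans l; exact: powR_ge0.
split.
  by apply/andP; split; [rewrite mulr_ge0 // ltW | nra].
apply/andP; split.
  by rewrite (powRM _ z0 (ltW eb0)) pe ler_wpM2r // ltW.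
have h1z : 0 <= 1 - z.2 by lra.
have hc := @convpow R (alpha / beta) eb (1 - z.2) 1 g1 (ltW eb0) eb1 h1z ler01.
have e1 : eb * (1 - z.2) + (1 - eb) * 1 = 1 - z.2 * eb by ring.
rewrite e1 powR1 in hc.
have := powR_ge0 (1 - z.2) (alpha / beta).
nra.
Qed.

Lemma Phi_Gamma i t z : 0 <= t -> Gamma alpha beta z -> Gamma alpha beta (Phi alpha beta i t z).
Proof.
move=> t0; case: i; last exact: Phi0_Gamma.
move=> /Gamma_flip /(Phi0_Gamma _ _ t0) /Gamma_flip.
congr Gamma; rewrite /Phi /=; congr pair; ring.
Qed.

Lemma Psi_cont i t : continuous (Psi alpha beta i t).
Proof.
move=> w; rewrite /Psi /Phi.
rewrite /continuous_at.
apply: (@cvg_pair _ _ _ (nbhs w) (nbhs _) (nbhs _)).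
  apply: cvgD; first exact: cvg_cst.
  apply: cvgM; last exact: cvg_cst.
  by apply: cvgB; [exact: cvg_fst | exact: cvg_cst].
apply: cvgD; first exact: cvg_cst.
apply: cvgM; last exact: cvg_cst.
by apply: cvgB; [exact: cvg_snd | exact: cvg_cst].
Qed.

Lemma Gamma_int_back i t y : 0 <= t ->
  Gamma_int alpha beta (Psi alpha beta i t y) -> Gamma_int alpha beta y.
Proof.
move=> t0; rewrite /Gamma_int /interior => h.
have h2 : nbhs y (Psi alpha beta i t @^-1` Gamma alpha beta) := Psi_cont i t y _ h.
apply: filterS h2 => w /= Gw.
by rewrite -(Phi_Psi i t w); apply: Phi_Gamma.
Qed.
End Gam.

Section Seq.
Variable R : realType.
Variables alpha beta : R.

Lemma psiR_rcons i (l : seq R) u y :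
  psiR alpha beta i (rcons l u) y = Psi alpha beta (i (+) odd (size l)) u (psiR alpha beta i l y).
Proof.
elim: l i y => [|a l IH] i y /=; first by rewrite addbF.
by rewrite IH addbN addNb.
Qed.

Lemma Psi0_cons u ts x : Psi0_seq alpha beta (u :: ts) x =
  Psi alpha beta (odd (size ts)) u (Psi0_seq alpha beta ts x).
Proof. by rewrite /Psi0_seq rev_cons psiR_rcons size_rev. Qed.

Lemma inner_cons2 lam0 lam1 n r s (ts : seq R) :
  inner_lam lam0 lam1 n.+2 (r :: s :: ts) =
  lamvec lam0 lam1 n.+2 0 * r + lamvec lam0 lam1 n.+2 1 * s + inner_lam lam0 lam1 n ts.
Proof.
rewrite /inner_lam 2!big_ord_recl /= addrA; congr (_ + _).
apply: eq_bigr => k _; rewrite /lamvec /=.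
have -> : (n.+2 - 1 - (bump 0 (bump 0 k)) = n - 1 - k)%N by rewrite /bump /=; lia.
by [].
Qed.

Hypothesis hb : 0 < beta.
Hypothesis hab : beta < alpha.

Lemma msplit n eps x r s ts : (0 < n)%N -> Mset alpha beta n.+2 eps x (r :: s :: ts) ->
  [/\ Mset alpha beta n eps x ts, 0 < r, 0 < s & [/\
   `|D alpha beta (Psi0_seq alpha beta ts x)| < eps,
   `|D alpha beta (Psi alpha beta (odd n) s (Psi0_seq alpha beta ts x))| < eps &
   `|D alpha beta (Psi alpha beta (~~ odd n) r
        (Psi alpha beta (odd n) s (Psi0_seq alpha beta ts x)))| < eps]].
Proof.
move=> n0 [[sz [pv G]] hD].
have szts : size ts = n by move: sz => /= [].
have e1 : Psi0_seq alpha beta (s :: ts) x =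
    Psi alpha beta (odd n) s (Psi0_seq alpha beta ts x) by rewrite Psi0_cons szts.
have e2 : Psi0_seq alpha beta (r :: s :: ts) x =
    Psi alpha beta (~~ odd n) r (Psi0_seq alpha beta (s :: ts) x) by rewrite Psi0_cons /= szts.
have r0 : 0 < r by have := pv 0%N; rewrite sz; apply.
have s0 : 0 < s by have := pv 1%N; rewrite sz; apply.
have hDj : forall j k, (j < n.+2)%N -> (n.+2 - 1 - j = k)%N ->
    `|D alpha beta (Psi0_seq alpha beta (drop k (r :: s :: ts)) x)| < eps.
  by move=> j k hj <-; apply: hD.
split => //; last split.
- split; first split => //.
  + split.
      by move=> k hk; apply: (pv k.+2); rewrite sz /= !ltnS -szts.
    rewrite e2 e1 in G.
    by apply: (@Gamma_int_back R alpha beta hb hab _ s _ (ltW s0)); apply: (@Gamma_int_back R alpha beta hb hab _ r _ (ltW r0)); exact: G.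
  + by move=> j hj; exact: (hDj j (n - 1 - j).+2 ltac:(lia) ltac:(lia)).
- by have := hDj (n - 1)%N 2%N ltac:(lia) ltac:(lia); rewrite /= drop0.
- by rewrite -e1; exact: (hDj n 1%N ltac:(lia) ltac:(lia)).
- by rewrite -e1 -e2; exact: (hDj n.+1 0%N ltac:(lia) ltac:(lia)).
Qed.
End Seq.

Definition Bf {R : realType} (l b1 rho sg r s : R) : R :=
  b1 * expR (- (l * r)) * expR (- (l / 2 * s)) +
  \1_(`]0%R, rho[%classic : set R) r * expR (- (l * s)) +
  expR (- (l * r)) * \1_(`]0%R, sg[%classic : set R) s.

Definition dltF {R : realType} (alpha beta eps : R) := eps / (alpha * beta).
Definition rhoF {R : realType} (alpha beta eps : R) := 8 * dltF alpha beta eps / (alpha - beta).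
Definition sgF {R : realType} (alpha beta eps : R) := 4 * dltF alpha beta eps / (alpha - beta).
Definition SF {R : realType} (alpha beta eps : R) :=
  ln ((alpha - beta) / (8 * alpha) / dltF alpha beta eps) / alpha.
Definition b1F {R : realType} (alpha beta l eps : R) := expR (- (l / 2 * SF alpha beta eps)).
Definition fF {R : realType} (alpha beta l eps : R) :=
  (b1F alpha beta l eps / (l / 2) + sgF alpha beta eps) / l + 0 / l + l^-1 * rhoF alpha beta eps.

Section Main.
Variable R : realType.
Variables alpha beta : R.
Hypothesis hb : 0 < beta.
Hypothesis hab : beta < alpha.
Variables lam0 lam1 : R.
Hypothesis hl0 : 0 < lam0.
Hypothesis hl1 : 0 < lam1.
Variable eps : R.
Hypothesis heps : 0 < eps.
Variable n : nat.
Hypothesis hn : (0 < n)%N.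
Variable x : R * R.

Let l := Num.min lam0 lam1.
Let l0 : 0 < l. Proof. by rewrite /l lt_min hl0 hl1. Qed.
Let lamvec_ge m k : l <= lamvec lam0 lam1 m k.
Proof. by rewrite /lamvec /l; case: ifP => _; rewrite ge_min lexx ?orbT. Qed.

Let a0 : 0 < alpha. Proof. exact: lt_trans hab. Qed.
Let ab0 : 0 < alpha * beta. Proof. exact: mulr_gt0. Qed.

Let Dlt y : `|D alpha beta y| < eps -> `|y.1 - y.2| < dltF alpha beta eps.
Proof.
rewrite /D /dltF normrM (gtr0_norm ab0) => h.
by rewrite ltr_pdivlMr // mulrC.
Qed.

Lemma Wbound (a b r s : R) : l <= a -> l <= b -> 0 < r -> 0 < s ->
  (SF alpha beta eps <= s \/ r < rhoF alpha beta eps \/ s < sgF alpha beta eps) ->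
  expR (- (a * r + b * s)) <= Bf l (b1F alpha beta l eps) (rhoF alpha beta eps) (sgF alpha beta eps) r s.
Proof.
move=> la lb r0 s0 h; have L0 := l0.
have W1 : expR (- (a * r + b * s)) <= expR (- (l * r)) * expR (- (l * s)).
  rewrite -expRD ler_expR.
  have : 0 <= (a - l) * r by rewrite mulr_ge0 // ?subr_ge0 // ltW.
  have : 0 <= (b - l) * s by rewrite mulr_ge0 // ?subr_ge0 // ltW.
  lra.
have er1 : expR (- (l * r)) <= 1 by rewrite -expR0 ler_expR; nra.
have es1 : expR (- (l * s)) <= 1 by rewrite -expR0 ler_expR; nra.
have ern := expR_gt0 (- (l * r)).
have esn := expR_gt0 (- (l * s)).
have i1 : forall (A : set R) t, 0 <= \1_A t :> R by move=> A t; rewrite indicE.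
have b10 : 0 <= b1F alpha beta l eps by rewrite ltW // expR_gt0.
have e2 := expR_gt0 (- (l / 2 * s)).
rewrite /Bf; apply: le_trans W1 _.
case: h => [Ss|[rr|ss]].
- have : expR (- (l * s)) <= b1F alpha beta l eps * expR (- (l / 2 * s)).
    rewrite /b1F -expRD ler_expR; nra.
  have := i1 (`]0%R, rhoF alpha beta eps[%classic) r.
  have := i1 (`]0%R, sgF alpha beta eps[%classic) s.
  nra.
- have -> : \1_(`]0%R, rhoF alpha beta eps[%classic : set R) r = 1.
    by rewrite /indic mem_set //= in_itv /= r0 rr.
  have := i1 (`]0%R, sgF alpha beta eps[%classic) s.
  have : 0 <= b1F alpha beta l eps * expR (- (l * r)) * expR (- (l / 2 * s)) by rewrite !mulr_ge0 // ltW.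
  nra.
- have -> : \1_(`]0%R, sgF alpha beta eps[%classic : set R) s = 1.
    by rewrite /indic mem_set //= in_itv /= s0 ss.
  have := i1 (`]0%R, rhoF alpha beta eps[%classic) r.
  have : 0 <= b1F alpha beta l eps * expR (- (l * r)) * expR (- (l / 2 * s)) by rewrite !mulr_ge0 // ltW.
  nra.
Qed.

Let b1 := b1F alpha beta l eps.
Let rho := rhoF alpha beta eps.
Let sg := sgF alpha beta eps.

Lemma Bf_ge0 r s : 0 <= Bf l b1 rho sg r s.
Proof.
have i1 : forall (A : set R) t, 0 <= \1_A t :> R by move=> A t; rewrite indicE.
by rewrite /Bf !addr_ge0 // !mulr_ge0 // ?i1 // ltW // expR_gt0.
Qed.

Lemma pw r s ts : ((((\1_(Mset alpha beta n.+2 eps x) (r :: s :: ts)) : R) *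
   expR (- inner_lam lam0 lam1 n.+2 (r :: s :: ts)))%:E <=
 (Bf l b1 rho sg r s)%:E *
   (((\1_(Mset alpha beta n eps x) ts) : R) * expR (- inner_lam lam0 lam1 n ts))%:E)%E.
Proof.
have i1 : forall (A : set (seq R)) t, 0 <= \1_A t :> R by move=> A t; rewrite indicE.
rewrite {1}/indic; case: (boolP ((r :: s :: ts) \in Mset alpha beta n.+2 eps x)) => hM; last first.
  by rewrite mul0r; apply: mule_ge0; rewrite lee_fin ?Bf_ge0 // mulr_ge0 // ltW // expR_gt0.
have [hMn r0 s0 [Dy Dz Dw]] := @msplit R alpha beta hb hab _ _ _ _ _ _ hn (set_mem hM).
rewrite /indic (mem_set hMn) /= !mul1r -EFinM lee_fin inner_cons2 opprD expRD.
rewrite ler_pM2r ?expR_gt0 //.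
apply: Wbound; [exact: lamvec_ge | exact: lamvec_ge | exact: r0 | exact: s0 |].
have dp : 0 < dltF alpha beta eps by rewrite /dltF divr_gt0.
have := @key R alpha beta hb hab _ (odd n) _ r s dp r0 s0 (Dlt _ Dy) (Dlt _ Dz) (Dlt _ Dw).
by rewrite /SF /rhoF /sgF.
Qed.

Notation I := (`]0%R, +oo[%classic : set R).
Notation mu := (@lebesgue_measure R).

Let dp : 0 < dltF alpha beta eps. Proof. by rewrite /dltF divr_gt0. Qed.
Let c0 : 0 < alpha - beta. Proof. by rewrite subr_gt0. Qed.
Let rho0 : 0 < rho. Proof. by rewrite /rho /rhoF !mulr_gt0 // invr_gt0. Qed.
Let sg0 : 0 < sg. Proof. by rewrite /sg /sgF !mulr_gt0 // invr_gt0. Qed.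
Let b10 : 0 < b1. Proof. exact: expR_gt0. Qed.

Lemma fF_gt0 : 0 < fF alpha beta l eps.
Proof.
have L0 := l0.
rewrite /fF mul0r addr0 addr_gt0 // ?mulr_gt0 ?invr_gt0 // addr_gt0 // mulr_gt0 // invr_gt0.
by rewrite mulr_gt0 // invr_gt0.
Qed.

Lemma dbl_int : (\int[mu]_(r in I) \int[mu]_(s in I) (Bf l b1 rho sg r s)%:E <=
   (fF alpha beta l eps)%:E)%E.
Proof.
have L0 := l0; have B1 := b10; have S0 := sg0; have R0 := rho0.
have l20 : 0 < l / 2 by rewrite divr_gt0.
have X0 : 0 <= b1 / (l / 2) + sg.
  by apply: addr_ge0; [apply: divr_ge0; apply: ltW | apply: ltW].
have Z0 : 0 <= l^-1 by rewrite invr_ge0 ltW.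
have i1 : forall (A : set R) t, 0 <= \1_A t :> R by move=> A t; rewrite indicE.
apply: (@le_trans _ _ (\int[mu]_(r in I)
   ((b1 / (l / 2) + sg) * expR (- (l * r)) + 0 * expR (- (l * r)) +
      l^-1 * \1_(`]0%R, rho[%classic : set R) r)%:E)%E); last first.
  by apply: int3.
apply: int_le_nm.
- by move=> r _; apply: integral_ge0 => s _; rewrite lee_fin Bf_ge0.
- move=> r _; rewrite lee_fin mul0r addr0; apply: addr_ge0; apply: mulr_ge0 => //.
move=> r Ir; split => //.
have e0 := expR_gt0 (- (l * r)).
have := @int3 R (b1 * expR (- (l * r))) (\1_(`]0%R, rho[%classic : set R) r) (expR (- (l * r))) (l / 2) l sg.
move=> /(_ (mulr_ge0 (ltW B1) (ltW e0)) (i1 _ _) (ltW e0) l20 L0 S0) h.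
rewrite /Bf; apply: le_trans h _.
rewrite lee_fin mul0r addr0 le_eqVlt; apply/orP; left; apply/eqP.
by field; rewrite gt_eqF.
Qed.

Lemma main_ineq : (calM alpha beta n.+2 eps lam0 lam1 x <=
   (fF alpha beta l eps)%:E * calM alpha beta n eps lam0 lam1 x)%E.
Proof.
set G := fun ts => (((\1_(Mset alpha beta n eps x) ts) : R) * expR (- inner_lam lam0 lam1 n ts))%:E.
have G0 : forall ts, (0 <= G ts)%E.
  by move=> ts; rewrite lee_fin mulr_ge0 // ?indicE // ltW // expR_gt0.
have -> : calM alpha beta n eps lam0 lam1 x = iint n G by [].
pose H := fun ts : seq R => match ts with
  | r :: s :: ts' => ((Bf l b1 rho sg r s)%:E * G ts')%E | _ => 0%E end.
have st1 : (calM alpha beta n.+2 eps lam0 lam1 x <= iint n.+2 H)%E.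
  apply: iint_le.
    by move=> ts; rewrite lee_fin mulr_ge0 // ?indicE // ltW // expR_gt0.
  have nM : forall ts : seq R, size ts <> n.+2 -> ~ Mset alpha beta n.+2 eps x ts.
    by move=> ts hs [[sz _] _].
  move=> [|r [|s ts]].
  - by rewrite /indic memNset /= ?mul0r //; apply: nM.
  - by rewrite /indic memNset /= ?mul0r //; apply: nM.
  - exact: pw.
apply: le_trans st1 _.
have st2 : (iint n.+2 H <= \int[mu]_(r in I) \int[mu]_(s in I) ((Bf l b1 rho sg r s)%:E * iint n G))%E.
  rewrite /=; apply: int_le_nm.
  - by move=> r _; apply: integral_ge0 => s _; apply: iint_ge0 => ts; rewrite mule_ge0 // lee_fin Bf_ge0.
  - by move=> r _; apply: integral_ge0 => s _; rewrite mule_ge0 ?lee_fin ?Bf_ge0 // iint_ge0.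
  move=> r Ir; split => //; apply: int_le_nm.
  - by move=> s _; apply: iint_ge0 => ts; rewrite mule_ge0 // lee_fin Bf_ge0.
  - by move=> s _; rewrite mule_ge0 ?lee_fin ?Bf_ge0 // iint_ge0.
  move=> s Is; split => //; apply: iint_scale => //; exact: Bf_ge0.
apply: le_trans st2 _.
have K0 : (0 <= iint n G)%E := @iint_ge0 R n G G0.
move: K0; case: (iint n G) => [k| |] // K0.
- rewrite lee_fin in K0.
  apply: (@le_trans _ _ (\int[mu]_(r in I) (k%:E * \int[mu]_(s in I) (Bf l b1 rho sg r s)%:E))%E).
    apply: int_le_nm.
    + by move=> r _; apply: integral_ge0 => s _; rewrite mule_ge0 ?lee_fin ?Bf_ge0.
    + by move=> r _; rewrite mule_ge0 ?lee_fin // integral_ge0 // => s _; rewrite lee_fin Bf_ge0.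
    move=> r Ir; split => //.
    under eq_integral do rewrite muleC.
    by apply: int_scale_le => // s _; rewrite lee_fin Bf_ge0.
  apply: le_trans; first by apply: int_scale_le => // r _; apply: integral_ge0 => s _; rewrite lee_fin Bf_ge0.
  by rewrite muleC; apply: lee_wpmul2r; rewrite ?lee_fin // dbl_int.
- by rewrite gt0_muley ?lte_fin ?fF_gt0 // leey.
Qed.
End Main.

Lemma flim (R : realType) (alpha beta : R) (hb : 0 < beta)
  (hab : beta < alpha) (lam0 lam1 : R) (hl0 : 0 < lam0) (hl1 : 0 < lam1) :
  fF alpha beta (Num.min lam0 lam1) eps @[eps --> 0^'+] --> 0.
Proof.
set l := Num.min lam0 lam1.
have l0 : 0 < l by rewrite /l lt_min hl0 hl1.
have a0 : 0 < alpha by apply: lt_trans hab.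
have c0 : 0 < alpha - beta by rewrite subr_gt0.
have A0 : 0 < alpha * beta by rewrite mulr_gt0.
set c := alpha - beta in c0 *.
set A := alpha * beta in A0 *.
set K := c / (8 * alpha).
have K0 : 0 < K by rewrite divr_gt0 // mulr_gt0.
apply/cvgrPdist_lt => e e0.
set E := e * (l * l) / 4.
have E0 : 0 < E by rewrite divr_gt0 // !mulr_gt0.
set M := - (2 * alpha / l) * ln E.
set d1 := e * (A * c * l) / 24.
set d2 := A * K / expR M.
have d10 : 0 < d1 by rewrite divr_gt0 // !mulr_gt0.
have d20 : 0 < d2 by apply: divr_gt0; [exact: mulr_gt0 | exact: expR_gt0].
near=> eps.
have ep : 0 < eps by near: eps; exact: nbhs_right_gt.
have ed1 : eps < d1 by near: eps; exact: nbhs_right_lt.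
have ed2 : eps < d2 by near: eps; exact: nbhs_right_lt.
have fpos := @fF_gt0 R alpha beta hb hab lam0 lam1 hl0 hl1 eps ep.
rewrite sub0r normrN gtr0_norm //.
have dl0 : 0 < dltF alpha beta eps by rewrite /dltF divr_gt0.
have hb1 : b1F alpha beta l eps < E.
  rewrite /b1F /SF -/c -/K.
  set L := ln (K / dltF alpha beta eps).
  have hM : M < L.
    rewrite /L -ltr_expR lnK ?posrE ?divr_gt0 ?mulr_gt0 //.
    rewrite ltr_pdivlMr // /dltF -/A.
    have h : eps * expR M < A * K by move: ed2; rewrite /d2 ltr_pdivlMr ?expR_gt0.
    have -> : expR M * (eps / A) = (eps * expR M) / A by rewrite mulrC mulrAC.
    by rewrite ltr_pdivrMr //; lra.
  rewrite -[E]lnK ?posrE // ltr_expR.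
  have e1 : ln E = - (l / (2 * alpha)) * M by rewrite /M; field; rewrite !gt_eqF.
  have e2 : - (l / 2 * (L / alpha)) = - (l / (2 * alpha)) * L by field; rewrite gt_eqF.
  rewrite e1 e2 !mulNr ltrN2 ltr_pM2l //.
  by rewrite divr_gt0 // mulr_gt0.
have fe : fF alpha beta l eps =
    2 * b1F alpha beta l eps / (l * l) + 12 * eps / (A * c * l).
  rewrite /fF /sgF /rhoF /dltF -/A -/c; field.
  by rewrite !gt_eqF.
rewrite fe.
have h1 : 2 * b1F alpha beta l eps / (l * l) < e / 2.
  rewrite ltr_pdivrMr ?mulr_gt0 //.
  move: hb1; rewrite /E; lra.
have h2 : 12 * eps / (A * c * l) < e / 2.
  rewrite ltr_pdivrMr ?mulr_gt0 //.
  move: ed1; rewrite /d1; set P := A * c * l.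
  have P0 : 0 < P by rewrite !mulr_gt0.
  move=> h; rewrite ltr_pdivlMr // in h.
  nra.
lra.
Unshelve. all: by end_near. Qed.

Theorem lemma7p8 (R : realType) (alpha beta : R) (hb : 0 < beta)
  (hab : beta < alpha) (lam0 lam1 : R) (hl0 : 0 < lam0) (hl1 : 0 < lam1) :
  exists f : R -> R,
    (forall eps, 0 < eps -> 0 <= f eps) /\
    (f eps @[eps --> 0^'+] --> 0) /\
    (forall (eps : R) (n : nat) (x : R * R), 0 < eps -> (0 < n)%N ->
       Gamma_int alpha beta x ->
       (calM alpha beta n.+2 eps lam0 lam1 x <=
          (f eps)%:E * calM alpha beta n eps lam0 lam1 x)%E).
Proof.
exists (fun eps => fF alpha beta (Num.min lam0 lam1) eps).
split; [|split].
- move=> eps e0; apply: ltW; exact: (@fF_gt0 R alpha beta hb hab lam0 lam1 hl0 hl1 eps e0).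
- exact: flim.
- move=> eps n x e0 hn _.
  exact: (@main_ineq R alpha beta hb hab lam0 lam1 hl0 hl1 eps e0 n hn x).
Qed.
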